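(* Let $M$ be a finite set of alternatives, $\mathcal{R}$ the set of weak preference orders on $M$, and $\varphi:\mathcal{R}\to\Delta(M)$ a mechanism. If $\varphi$ is strategyproof, then it is separation responsive.
   Context: A preference order is a complete, transitive relation $R$ on $M$; $a\,I\,b$ means $a\,R\,b$ and $b\,R\,a$; $a\,P\,b$ means $a\,R\,b$ and not $b\,R\,a$. Write $R$ as $M_1\,P\,\cdots\,P\,M_K$ where $(M_k)$ are the nonempty indifference classes ordered so that $a\,P\,b$ for $a\in M_k$, $b\in M_{k'}$, $k<k'$. For $A\subseteq M$, $\varphi_A(R)=\sum_{a\in A}(\varphi(R))_a$. A lottery $x$ first order-stochastically dominates $y$ at $R$ if $\sum_{j: j R a}x_j\ge\sum_{j: j R a}y_j$ for all $a\in M$. $\varphi$ is strategyproof if $\varphi(R)$ first order-stochastically dominates $\varphi(R')$ at $R$ for all $R,R'\in\mathcal{R}$. A separation is a pair $(R,R')$ such that, with $R=M_1\,P\,\cdots\,P\,M_K$, there are $\kappa\in\{1,\dots,K\}$ and a partition of $M_\kappa$ into disjoint nonempty $M_\kappa^1,M_\kappa^2$ with $R'=M_1\,P'\,\cdots\,P'\,M_{\kappa-1}\,P'\,M_\kappa^1\,P'\,M_\kappa^2\,P'\,M_{\kappa+1}\,P'\,\cdots\,P'\,M_K$ (indifference within each listed set). $\varphi$ is separation responsive if for every separation $(R,R')$, $\varphi_{M_\kappa^1}(R')\ge\varphi_{M_\kappa^1}(R)$ and $\varphi_{M_\kappa^2}(R')\le\varphi_{M_\kappa^2}(R)$. *)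

(* Defs.v *)
From HB Require Import structures.
From mathcomp Require Import all_boot all_order all_algebra.
Set Implicit Arguments. Unset Strict Implicit. Unset Printing Implicit Defensive.
Import Order.TTheory GRing.Theory Num.Theory.
Local Open Scope ring_scope.

(* A preference order: complete, transitive relation on M (R x y = "x R y"). *)
Definition pref_order (M : finType) (R : rel M) : Prop := total R /\ transitive R.

Definition lottery (F : realFieldType) (M : finType) (x : M -> F) : Prop :=
  (forall a, 0 <= x a) /\ \sum_(a : M) x a = 1.

Definition phiA (F : realFieldType) (M : finType) (x : M -> F) (A : {set M}) : F :=
  \sum_(a in A) x a.

Definition fosd (F : realFieldType) (M : finType) (R : rel M) (x y : M -> F) : Prop :=
  forall a : M, \sum_(j | R j a) y j <= \sum_(j | R j a) x j.

Definition strategyproof (F : realFieldType) (M : finType) (phi : rel M -> M -> F) : Prop :=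
  forall R R' : rel M, pref_order R -> pref_order R' -> fosd R (phi R) (phi R').

Definition indiff_class (M : finType) (R : rel M) (x : M) : {set M} :=
  [set y | R x y && R y x].

(* (R, R') is a separation, splitting the indifference class M_kappa = A :|: B
   into M_kappa^1 = A (placed strictly above) and M_kappa^2 = B. R' agrees with R
   everywhere except that no element of B is weakly preferred to an element of A:
   this is exactly the order M_1 P' ... P' M_kappa^1 P' M_kappa^2 P' ... P' M_K. *)
Definition separation (M : finType) (R R' : rel M) (A B : {set M}) : Prop :=
  [/\ A != set0, B != set0, [disjoint A & B],
      (exists x, A :|: B = indiff_class R x) &
      (forall x y, R' x y = R x y && ~~ ((x \in B) && (y \in A)))].

Definition separation_responsive (F : realFieldType) (M : finType)
  (phi : rel M -> M -> F) : Prop :=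
  forall (R R' : rel M) (A B : {set M}), pref_order R -> separation R R' A B ->
    phiA (phi R) A <= phiA (phi R') A /\ phiA (phi R') B <= phiA (phi R) B.

(* Main.v *)
Require Import Defs.
From mathcomp Require Import all_boot all_order all_algebra.
From mathcomp Require Import lra.
Import Order.TTheory GRing.Theory Num.Theory.
Local Open Scope ring_scope.

Theorem lemma3 (F : realFieldType) (M : finType) (phi : rel M -> M -> F) :
  (forall R : rel M, pref_order R -> lottery (phi R)) ->
  strategyproof phi -> separation_responsive phi.
Proof.
move=> _ SP R R' A B [Rtot Rtr] [nA nB dAB [w Hw] HR'].
have inC z : (z \in A :|: B) = R w z && R z w by rewrite Hw inE.
have dABp : forall z, z \in A -> z \in B -> False.
  by move=> z zA zB; move/pred0P: dAB => /(_ z); rewrite /= zA zB.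
have CA z : z \in A -> R w z && R z w by move=> zA; rewrite -inC inE zA.
have CB z : z \in B -> R w z && R z w by move=> zB; rewrite -inC inE zB orbT.
have Rrefl z : R z z by have := Rtot z z; rewrite orbb.
have R'po : pref_order R'.
  split.
  - move=> x y; rewrite !HR'.
    case Rxy: (R x y) => /=.
      case: (boolP ((x \in B) && (y \in A))) => [/andP[xB yA]|_]; last by [].
      have Ryx : R y x.
        by move: (CA _ yA) (CB _ xB) => /andP[_ Ryw] /andP[Rwx _]; exact: Rtr Ryw Rwx.
      rewrite /= Ryx /=; apply/negP => /andP[yB _]; exact: dABp yA yB.
    have Ryx : R y x by have := Rtot x y; rewrite Rxy.
    rewrite Ryx /=; apply/negP => /andP[yB xA].
    move: (CA _ xA) (CB _ yB) => /andP[_ Rxw] /andP[Rwy _].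
    by rewrite (Rtr _ _ _ Rxw Rwy) in Rxy.
  - move=> y x z; rewrite !HR' => /andP[Rxy nxy] /andP[Ryz nyz].
    rewrite (Rtr _ _ _ Rxy Ryz) /=; apply/negP => /andP[xB zA].
    move: (CB _ xB) (CA _ zA) => /andP[Rwx Rxw] /andP[Rwz Rzw].
    have yC : y \in A :|: B by rewrite inC (Rtr _ _ _ Rwx Rxy) (Rtr _ _ _ Ryz Rzw).
    move: yC; rewrite inE => /orP[yA|yB].
      by rewrite xB yA in nxy.
    by rewrite yB zA in nyz.
have SP1 := SP R R' (conj Rtot Rtr) R'po.
have SP2 := SP R' R R'po (conj Rtot Rtr).
set x := phi R in SP1 SP2 *; set y := phi R' in SP1 SP2 *.
pose U := [set j | R j w && ~~ R w j].
have dUC : [disjoint U & A :|: B].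
  apply/pred0P => j /=; rewrite inC inE; by case: (R w j); rewrite ?andbF.
have dUA : [disjoint U & A].
  apply/pred0P => j /=; rewrite inE; apply/negP => /andP[/andP[_ nR] jA].
  by move: (CA _ jA) nR => /andP[-> _].
have RC a : a \in A :|: B -> forall j, R j a = (j \in [predU U & A :|: B]).
  rewrite inC => /andP[Rwa Raw] j; rewrite /= -topredE /= inC /U inE.
  apply/idP/idP.
    move=> Rja; have Rjw := Rtr _ _ _ Rja Raw; rewrite Rjw /=.
    by case: (R w j).
  by move=> /orP[/andP[Rjw _]|/andP[_ Rjw]]; exact: Rtr Rjw Rwa.
have sumC (f : M -> F) a : a \in A :|: B ->
    \sum_(j | R j a) f j = \sum_(j in U) f j + (\sum_(j in A) f j + \sum_(j in B) f j).
  move=> aC; rewrite (eq_bigl _ _ (RC a aC)) bigU //.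
  congr (_ + _); rewrite -bigU //; apply: eq_bigl => j; by rewrite /= inE.
have sumA (f : M -> F) a : a \in A ->
    \sum_(j | R' j a) f j = \sum_(j in U) f j + \sum_(j in A) f j.
  move=> aA; rewrite -bigU //; apply: eq_bigl => j.
  have aC : a \in A :|: B by rewrite inE aA.
  rewrite HR' aA andbT RC //= !inE.
  case: (boolP (j \in B)) => jB /=; last by rewrite orbF andbT.
  rewrite andbF; move: (CB _ jB) => /andP[-> _]; rewrite andbF /=.
  by apply/esym/negP => jA; exact: dABp jA jB.
have sumB (f : M -> F) b : b \in B -> \sum_(j | R' j b) f j = \sum_(j | R j b) f j.
  move=> bB; apply: eq_bigl => j; rewrite HR'.
  by case: (boolP (b \in A)) => [bA|_]; [case: (dABp _ bA bB)|rewrite andbF andbT].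
have TU : \sum_(j in U) x j = \sum_(j in U) y j.
  have [U0|[u0 u0U]] := set_0Vmem U; first by rewrite U0 !big_set0.
  case: (@arg_maxnP _ u0 (mem U) (fun u => #|[set j | R j u]|) u0U) => u uU umax.
  have HU j : R j u = (j \in U).
    have uU2 : u \in U := uU.
    have /andP[Ruw nRwu] : R u w && ~~ R w u by move: uU2; rewrite inE.
    apply/idP/idP.
      move=> Rju; rewrite inE (Rtr _ _ _ Rju Ruw) /=; apply/negP => Rwj.
      by rewrite (Rtr _ _ _ Rwj Rju) in nRwu.
    move=> jU; case Rju: (R j u) => //.
    have Ruj : R u j by have := Rtot j u; rewrite Rju.
    have := umax j jU.
    have sub : [set k | R k u] \proper [set k | R k j].
      apply/properP; split.
        by apply/subsetP => k; rewrite !inE => Rku; exact: Rtr Rku Ruj.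
      by exists j; rewrite !inE ?Rrefl ?Rju.
    by rewrite /= leqNgt (proper_card sub).
  have uA : u \notin A.
    apply/negP => uA; have uU2 : u \in U := uU; move: uU2 (CA _ uA); rewrite inE => /andP[_ nR] /andP[R1 _].
    by rewrite R1 in nR.
  have HU' j : R' j u = (j \in U) by rewrite HR' (negbTE uA) andbF andbT HU.
  apply/eqP; rewrite eq_le; apply/andP; split.
    by have := SP2 u; rewrite !(eq_bigl _ _ HU').
  by have := SP1 u; rewrite !(eq_bigl _ _ HU).
have [a aA] : exists a, a \in A by case/set0Pn: nA => a; exists a.
have [b bB] : exists b, b \in B by case/set0Pn: nB => b; exists b.
have aC : a \in A :|: B by rewrite inE aA.
have bC : b \in A :|: B by rewrite inE bB orbT.
have E1 := SP1 a; rewrite !(sumC _ a aC) TU in E1.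
have E2 := SP2 b; rewrite !(sumB _ b bB) !(sumC _ b bC) TU in E2.
have E3 := SP2 a; rewrite !(sumA _ a aA) TU in E3.
rewrite /phiA; split; lra.
Qed.
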